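(* Let $m$ be a bounded generating sequence. There is a constant $c$ depending only on $m$ such that the following holds. Let $N\ge1$, $0\le k\le N-1$, $k+1\le l\le N$, and $x\in I_N^{k,l}$. Then for every integer $n\ge M_N$, $$\int_{I_N}|K_n(x-t)|\,d\mu(t)\le \frac{c\,M_lM_k}{M_N^2}.$$
   Context: Let $m=(m_0,m_1,\dots)$ be a sequence of integers $m_k\ge 2$ with $\sup_k m_k<\infty$. $G_m=\prod_k Z_{m_k}$ (where $Z_{m_k}=\{0,\dots,m_k-1\}$ is the group of integers mod $m_k$) with coordinatewise addition mod $m_k$, elements $x=(x_0,x_1,\dots)$, and normalized Haar measure $\mu$ (product of uniform measures). $M_0=1$, $M_{k+1}=m_kM_k$; every $n\in\mathbb{N}$ is uniquely $n=\sum_jn_jM_j$, $n_j\in Z_{m_j}$. $I_N=\{y\in G_m: y_0=\dots=y_{N-1}=0\}$. $r_k(x)=\exp(2\pi ix_k/m_k)$, $\psi_n=\prod_kr_k^{n_k}$, $D_n=\sum_{k=0}^{n-1}\psi_k$, and the Fejér kernel is $K_n=\frac1n\sum_{k=0}^{n-1}D_k$ ($n\ge1$). For $0\le k<l<N$, $I_N^{k,l}$ denotes the set of $x\in G_m$ with $x_0=\dots=x_{k-1}=0$, $x_k\ne0$, $x_{k+1}=\dots=x_{l-1}=0$, $x_l\ne0$, and $x_j$ arbitrary for $j>l$. For $0\le k<N$, $I_N^{k,N}$ denotes the set of $x\in G_m$ with $x_0=\dots=x_{k-1}=0$, $x_k\ne0$, $x_{k+1}=\dots=x_{N-1}=0$,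 and $x_j$ arbitrary for $j\ge N$. *)

(* Defs.v *)
From Stdlib Require Import Reals Arith Lia.
Open Scope R_scope.

Fixpoint rsum (f : nat -> R) (n : nat) : R :=
  match n with
  | O => 0
  | S n' => rsum f n' + f n'
  end.

Fixpoint M (m : nat -> nat) (k : nat) : nat :=
  match k with
  | O => 1%nat
  | S k' => (m k' * M m k')%nat
  end.

(* j-th digit n_j of n in the mixed radix system: n = sum_j n_j M_j *)
Definition digit (m : nat -> nat) (n j : nat) : nat :=
  ((n / M m j) mod m j)%nat.

(* Elements of G_m = prod_k Z_{m_k}: sequences x with 0 <= x_k < m_k *)
Definition inG (m : nat -> nat) (x : nat -> nat) : Prop :=
  forall j, (x j < m j)%nat.

Definition gsub (m : nat -> nat) (x t : nat -> nat) : nat -> nat :=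
  fun j => ((x j + (m j - t j)) mod m j)%nat.

(* psi_n(x) = prod_k r_k(x)^{n_k} = exp(i * theta m n x).  Since M_j >= 2^j > n
   for j >= n, all digits n_j with j >= n vanish, so the product is exactly
   the product over j < n. *)
Definition theta (m : nat -> nat) (n : nat) (x : nat -> nat) : R :=
  2 * PI * rsum (fun j => INR (digit m n j * x j) / INR (m j)) n.

Definition psi_re m n x := cos (theta m n x).
Definition psi_im m n x := sin (theta m n x).

Definition D_re m n x := rsum (fun k => psi_re m k x) n.
Definition D_im m n x := rsum (fun k => psi_im m k x) n.

Definition K_re m n x := / INR n * rsum (fun k => D_re m k x) n.
Definition K_im m n x := / INR n * rsum (fun k => D_im m k x) n.

Definition K_abs m n x := sqrt (K_re m n x ^ 2 + K_im m n x ^ 2).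

Definition depends_on (m : nat -> nat) (J : nat) (f : (nat -> nat) -> R) : Prop :=
  forall y z, inG m y -> inG m z -> (forall j, (j < J)%nat -> y j = z j) -> f y = f z.

(* v = int_{I_N} f dmu, for f depending on finitely many coordinates.
   For such f (depending on coordinates < J, J >= N), with respect to the
   normalized Haar (product) measure,
     int_{I_N} f dmu = (1/M_J) * sum_{t in prod_{j<J} Z_{m_j}, t_0=..=t_{N-1}=0} f(t).
   Elements t of prod_{j<J} Z_{m_j} are encoded by a < M_J through their digits;
   t in I_N  iff  M_N divides a. *)
Definition haar_int_IN (m : nat -> nat) (N : nat) (f : (nat -> nat) -> R) (v : R) : Prop :=
  exists J, (N <= J)%nat /\ depends_on m J f /\
    v = rsum (fun a => if Nat.eqb (a mod M m N) 0 then f (fun j => digit m a j) else 0)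
             (M m J) / INR (M m J).

Definition in_INkl (m : nat -> nat) (N k l : nat) (x : nat -> nat) : Prop :=
  inG m x /\
  (forall j, (j < k)%nat -> x j = 0%nat) /\
  x k <> 0%nat /\
  (forall j, (k < j)%nat -> (j < l)%nat -> x j = 0%nat) /\
  ((l < N)%nat -> x l <> 0%nat).

(* Main.v *)
Require Import Defs.
From Stdlib Require Import Reals Arith Lia Lra.
From Coquelicot Require Import Complex.
Open Scope R_scope.

Definition sh (s : nat) (f : nat -> nat) : nat -> nat := fun j => f (s + j)%nat.

Lemma M_pos m (hm : forall j, (2 <= m j)%nat) j : (1 <= M m j)%nat.
Proof. induction j; simpl; [lia|]. specialize (hm j). nia. Qed.

Lemma M_gt m (hm : forall j, (2 <= m j)%nat) j : (j < M m j)%nat.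
Proof. induction j; simpl; [lia|]. specialize (hm j). nia. Qed.

Lemma M_add m s q : M m (s + q) = (M m s * M (sh s m) q)%nat.
Proof.
  induction q; simpl.
  - rewrite Nat.add_0_r; lia.
  - rewrite Nat.add_succ_r. simpl. rewrite IHq. unfold sh. lia.
Qed.

Lemma M_mono m (hm : forall j, (2 <= m j)%nat) i j : (i <= j)%nat -> (M m i <= M m j)%nat.
Proof.
  intros H. replace j with (i + (j - i))%nat by lia. rewrite M_add.
  pose proof (M_pos (sh i m) (fun j => hm _) (j - i)). nia.
Qed.

Lemma digit_big m (hm : forall j, (2 <= m j)%nat) n j : (n < M m j)%nat -> digit m n j = 0%nat.
Proof.
  intros H. unfold digit. rewrite Nat.div_small by lia. apply Nat.Div0.mod_0_l.
Qed.

Lemma digit_lo m (hm : forall j, (2 <= m j)%nat) s a b p :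
  (b < M m s)%nat -> (p < s)%nat -> digit m (a * M m s + b) p = digit m b p.
Proof.
  intros Hb Hp. unfold digit.
  assert (E : M m s = (M m (S p) * M (sh (S p) m) (s - S p))%nat).
  { rewrite <- M_add. f_equal. lia. }
  rewrite E. simpl.
  pose proof (M_pos m hm p).
  replace (a * (m p * M m p * M (sh (S p) m) (s - S p)) + b)%nat
    with (b + (a * m p * M (sh (S p) m) (s - S p)) * M m p)%nat by ring.
  rewrite Nat.div_add by lia.
  replace (b / M m p + a * m p * M (sh (S p) m) (s - S p))%nat
    with (b / M m p + (a * M (sh (S p) m) (s - S p)) * m p)%nat by ring.
  apply Nat.Div0.mod_add.
Qed.

Lemma digit_hi m (hm : forall j, (2 <= m j)%nat) s a b q :
  (b < M m s)%nat -> digit m (a * M m s + b) (s + q) = digit (sh s m) a q.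
Proof.
  intros Hb. unfold digit. rewrite M_add, <- Nat.Div0.div_div.
  pose proof (M_pos m hm s).
  replace (a * M m s + b)%nat with (b + a * M m s)%nat by ring.
  rewrite Nat.div_add. 2: lia. rewrite (Nat.div_small b) by lia. simpl. reflexivity.
Qed.

Lemma rsum_ext f g n : (forall j, (j < n)%nat -> f j = g j) -> rsum f n = rsum g n.
Proof. induction n; intros H; simpl; auto. rewrite IHn, H; auto. Qed.

Lemma rsum_add f p q : rsum f (p + q) = rsum f p + rsum (fun i => f (p + i)%nat) q.
Proof. induction q; simpl. rewrite Nat.add_0_r; ring. rewrite Nat.add_succ_r; simpl; rewrite IHq; ring. Qed.

Lemma rsum_zero f n : (forall j, (j < n)%nat -> f j = 0) -> rsum f n = 0.
Proof. induction n; intros H; simpl; auto. rewrite IHn, H; auto. ring. Qed.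

Lemma rsum_stable f n R : (forall j, (n <= j)%nat -> f j = 0) -> (n <= R)%nat -> rsum f R = rsum f n.
Proof.
  intros H HR. replace R with (n + (R - n))%nat by lia. rewrite rsum_add.
  rewrite (rsum_zero (fun i => f (n+i)%nat)). ring. intros; apply H; lia.
Qed.

Lemma rsum_thr f n1 n2 : (forall j, (n1 <= j)%nat -> f j = 0) -> (forall j, (n2 <= j)%nat -> f j = 0) ->
  rsum f n1 = rsum f n2.
Proof.
  intros H1 H2. rewrite <- (rsum_stable f n1 (n1+n2)) by (auto; lia).
  apply rsum_stable; auto; lia.
Qed.

Definition term m n (y : nat -> nat) j := INR (digit m n j * y j) / INR (m j).

Lemma theta_eq m n y : theta m n y = 2 * PI * rsum (term m n y) n.
Proof. reflexivity. Qed.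

Lemma term_big m (hm : forall j, (2 <= m j)%nat) n y j : (n < M m j)%nat -> term m n y j = 0.
Proof. intros H. unfold term. rewrite digit_big by auto. simpl. unfold Rdiv; ring. Qed.

Lemma term_beyond m (hm : forall j, (2 <= m j)%nat) n y j : (n <= j)%nat -> term m n y j = 0.
Proof. intros H. apply term_big; auto. pose proof (M_gt m hm j). lia. Qed.

Lemma theta_split m (hm : forall j, (2 <= m j)%nat) s a b y : (b < M m s)%nat ->
  theta m (a * M m s + b) y = theta m b y + theta (sh s m) a (sh s y).
Proof.
  intros Hb. rewrite !theta_eq.
  set (n := (a * M m s + b)%nat).
  assert (hm' : forall j, (2 <= sh s m j)%nat) by (intros; apply hm).
  rewrite <- (rsum_stable (term m n y) n (s + n)); [| intros; apply term_beyond; auto | lia].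
  rewrite rsum_add.
  rewrite (rsum_ext (term m n y) (term m b y) s).
  2:{ intros j Hj. unfold term, n. rewrite digit_lo; auto. }
  rewrite (rsum_thr (term m b y) s b).
  2:{ intros j Hj. apply term_big; auto. pose proof (M_mono m hm s j Hj). lia. }
  2:{ intros; apply term_beyond; auto. }
  rewrite (rsum_ext _ (term (sh s m) a (sh s y)) n).
  2:{ intros j Hj. unfold term, n. rewrite digit_hi; auto. }
  rewrite (rsum_stable (term (sh s m) a (sh s y)) a n).
  2:{ intros; apply term_beyond; auto. }
  2:{ unfold n. pose proof (M_pos m hm s). nia. }
  ring.
Qed.

Lemma theta_low m (hm : forall j, (2 <= m j)%nat) s b y :
  (forall p, (p < s)%nat -> y p = 0%nat) -> (b < M m s)%nat -> theta m b y = 0.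
Proof.
  intros Hy Hb. rewrite theta_eq, rsum_zero. ring.
  intros j Hj. destruct (Nat.lt_ge_cases j s).
  - unfold term. rewrite Hy by auto. rewrite Nat.mul_0_r. simpl. unfold Rdiv; ring.
  - apply term_big; auto. pose proof (M_mono m hm s j H). lia.
Qed.

Lemma theta_first m (hm : forall j, (2 <= m j)%nat) c y : (c < m 0%nat)%nat ->
  theta m c y = INR c * (2 * PI * INR (y 0%nat) / INR (m 0%nat)).
Proof.
  intros Hc. rewrite theta_eq.
  rewrite (rsum_thr (term m c y) c 1).
  2:{ intros; apply term_beyond; auto. }
  2:{ intros j Hj. apply term_big; auto. pose proof (M_mono m hm 1 j Hj). simpl in H. lia. }
  change (rsum (term m c y) 1) with (0 + term m c y 0%nat). unfold term, digit.
  change (M m 0) with 1%nat. rewrite Nat.div_1_r, Nat.mod_small by auto.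
  rewrite mult_INR. unfold Rdiv. ring.
Qed.

Definition ec (t : R) : C := (cos t, sin t).
Definition psi m n y := ec (theta m n y).
Fixpoint csum (f : nat -> C) (n : nat) : C :=
  match n with O => RtoC 0 | S n' => Cplus (csum f n') (f n') end.
Definition Dc m j y := csum (fun i => psi m i y) j.
Definition Fc m n y := csum (fun j => Dc m j y) n.

Lemma ec_add a b : ec (a + b) = Cmult (ec a) (ec b).
Proof. unfold ec, Cmult; simpl. rewrite cos_plus, sin_plus. f_equal; ring. Qed.

Lemma Cmod_ec a : Cmod (ec a) = 1.
Proof. unfold Cmod, ec; simpl. transitivity (sqrt 1); [|apply sqrt_1]. f_equal. pose proof (sin2_cos2 a). unfold Rsqr in H. lra. Qed.

Lemma ec_0 : ec 0 = RtoC 1.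
Proof. unfold ec, RtoC. rewrite cos_0, sin_0. reflexivity. Qed.

Lemma psi_split m (hm : forall j, (2 <= m j)%nat) s a b y : (b < M m s)%nat ->
  psi m (a * M m s + b) y = Cmult (psi m b y) (psi (sh s m) a (sh s y)).
Proof. intros. unfold psi. rewrite theta_split by auto. apply ec_add. Qed.

Lemma psi_low m (hm : forall j, (2 <= m j)%nat) s b y :
  (forall p, (p < s)%nat -> y p = 0%nat) -> (b < M m s)%nat -> psi m b y = RtoC 1.
Proof. intros. unfold psi. rewrite (theta_low m hm s) by auto. apply ec_0. Qed.

Lemma csum_ext f g n : (forall j, (j < n)%nat -> f j = g j) -> csum f n = csum g n.
Proof. induction n; intros H; simpl; auto. rewrite IHn, H; auto. Qed.

Lemma csum_add f p q : csum f (p + q) = Cplus (csum f p) (csum (fun i => f (p + i)%nat) q).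
Proof.
  induction q; simpl. rewrite Nat.add_0_r. ring.
  rewrite Nat.add_succ_r; simpl; rewrite IHq. ring.
Qed.

Lemma csum_zero f n : (forall j, (j < n)%nat -> f j = RtoC 0) -> csum f n = RtoC 0.
Proof. induction n; intros H; simpl; auto. rewrite IHn, H; auto. ring. Qed.

Lemma csum_block f a b : csum f (a * b) = csum (fun i => csum (fun j => f (i * b + j)%nat) b) a.
Proof.
  induction a; simpl; auto. rewrite <- IHa. rewrite Nat.add_comm, csum_add. reflexivity.
Qed.

Lemma csum_scal_l z f n : csum (fun i => Cmult z (f i)) n = Cmult z (csum f n).
Proof. induction n; simpl. ring. rewrite IHn. ring. Qed.

Lemma csum_scal_r z f n : csum (fun i => Cmult (f i) z) n = Cmult (csum f n) z.
Proof. induction n; simpl. ring. rewrite IHn. ring. Qed.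

Lemma csum_const z n : csum (fun _ => z) n = Cmult (RtoC (INR n)) z.
Proof.
  induction n; cbn [csum]. simpl. unfold RtoC, Cmult; simpl. f_equal; ring. rewrite IHn. rewrite S_INR.
  unfold RtoC, Cmult, Cplus; simpl. f_equal; ring.
Qed.

Lemma Cmod_csum_le f n c : (forall j, (j < n)%nat -> Cmod (f j) <= c) -> Cmod (csum f n) <= INR n * c.
Proof.
  induction n; intros H; cbn [csum]. simpl. rewrite Cmod_0. lra.
  eapply Rle_trans. apply Cmod_triangle. rewrite S_INR.
  pose proof (IHn (fun j Hj => H j ltac:(lia))). pose proof (H n ltac:(lia)). lra.
Qed.

Lemma ec_nat_period k : ec (2 * PI * INR k) = RtoC 1.
Proof.
  unfold ec, RtoC. pose proof (cos_period 0 k). pose proof (sin_period 0 k).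
  replace (0 + 2 * INR k * PI) with (2 * PI * INR k) in * by ring.
  rewrite H, H0, cos_0, sin_0. reflexivity.
Qed.

Lemma ec_ne_1 a : 0 < a < 2 * PI -> ec a <> RtoC 1.
Proof.
  intros Ha E. unfold ec, RtoC in E. injection E as E1 E2.
  destruct (sin_eq_O_2PI_0 a) as [H|[H|H]]; try lra.
  subst. rewrite cos_PI in E1. lra.
Qed.

Lemma roots m (hm : forall j, (2 <= m j)%nat) y :
  (0 < y 0%nat < m 0%nat)%nat -> csum (fun c => psi m c y) (m 0%nat) = RtoC 0.
Proof.
  intros Hy. set (al := 2 * PI * INR (y 0%nat) / INR (m 0%nat)).
  set (g := fun c => ec (INR c * al)).
  rewrite (csum_ext _ g) by (intros; unfold g, psi; rewrite theta_first; auto).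
  assert (Hm : (0 < INR (m 0%nat))) by (apply lt_0_INR; specialize (hm 0%nat); lia).
  assert (Hgm : g (m 0%nat) = RtoC 1).
  { unfold g, al. replace (INR (m 0%nat) * (2 * PI * INR (y 0%nat) / INR (m 0%nat)))
      with (2 * PI * INR (y 0%nat)) by (field; lra). apply ec_nat_period. }
  assert (Hg0 : g 0%nat = RtoC 1).
  { unfold g. simpl. rewrite Rmult_0_l. apply ec_0. }
  assert (Hsh : forall n, csum (fun c => g (S c)) n = Cmult (ec al) (csum g n)).
  { intros n. rewrite <- csum_scal_l. apply csum_ext. intros j _. unfold g.
    rewrite <- ec_add. f_equal. rewrite S_INR. ring. }
  assert (Hs2 : forall n, csum g (S n) = Cplus (g 0%nat) (csum (fun c => g (S c)) n)).
  { intros n. change (S n) with (1 + n)%nat. rewrite csum_add. simpl. f_equal. ring. }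
  set (S0 := csum g (m 0%nat)).
  assert (E : Cmult (Cminus (ec al) (RtoC 1)) S0 = RtoC 0).
  { pose proof (Hs2 (m 0%nat)). simpl in H. rewrite Hsh, Hgm, Hg0 in H. fold S0 in H.
    unfold Cminus. rewrite Cmult_plus_distr_r.
    replace (Cmult (ec al) S0) with (Cplus S0 (RtoC 1) - RtoC 1)%C by (rewrite H; ring).
    ring. }
  apply Cmod_eq_0. apply (f_equal Cmod) in E. rewrite Cmod_mult, Cmod_0 in E.
  assert (Cmod (Cminus (ec al) (RtoC 1)) <> 0).
  { intros H0. apply Cmod_eq_0 in H0. apply (ec_ne_1 al).
    - unfold al. split.
      + apply Rdiv_lt_0_compat; auto. pose proof PI_RGT_0. apply Rmult_lt_0_compat; [lra|].
        apply lt_0_INR; lia.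
      + apply (Rmult_lt_reg_r (INR (m 0%nat))); auto. unfold Rdiv.
        rewrite Rmult_assoc, Rinv_l by lra. rewrite Rmult_1_r.
        pose proof PI_RGT_0. apply Rmult_lt_compat_l; [lra|]. apply lt_INR; lia.
    - replace (ec al) with (Cplus (Cminus (ec al) (RtoC 1)) (RtoC 1)) by ring. rewrite H0. ring. }
  destruct (Rmult_integral _ _ E); [contradiction | auto].
Qed.

Lemma Z1 m (hm : forall j, (2 <= m j)%nat) k y :
  (forall p, (p < k)%nat -> y p = 0%nat) -> (0 < y k < m k)%nat ->
  csum (fun j => psi m j y) (M m (S k)) = RtoC 0.
Proof.
  intros H0 Hk. change (M m (S k)) with (m k * M m k)%nat. rewrite csum_block.
  rewrite (csum_ext _ (fun c => Cmult (RtoC (INR (M m k))) (psi (sh k m) c (sh k y)))).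
  2:{ intros c _. rewrite (csum_ext _ (fun _ => psi (sh k m) c (sh k y))).
      - apply csum_const.
      - intros d Hd. rewrite psi_split by auto. rewrite (psi_low m hm k) by auto. ring. }
  rewrite csum_scal_l.
  replace (m k) with (sh k m 0%nat) by (unfold sh; f_equal; lia).
  rewrite roots. ring. intros; apply hm. unfold sh. rewrite Nat.add_0_r. auto.
Qed.

Lemma Lz m (hm : forall j, (2 <= m j)%nat) k y :
  (forall p, (p < k)%nat -> y p = 0%nat) -> (0 < y k < m k)%nat ->
  forall a, Dc m (a * M m (S k)) y = RtoC 0.
Proof.
  intros H0 Hk a. unfold Dc. rewrite csum_block. apply csum_zero. intros i _.
  rewrite (csum_ext _ (fun j => Cmult (psi m j y) (psi (sh (S k) m) i (sh (S k) y)))).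
  2:{ intros; apply psi_split; auto. }
  rewrite csum_scal_r, Z1 by auto. ring.
Qed.

Lemma Dsplit m (hm : forall j, (2 <= m j)%nat) s y :
  (forall a, Dc m (a * M m s) y = RtoC 0) -> forall a b, (b <= M m s)%nat ->
  Dc m (a * M m s + b) y = Cmult (psi (sh s m) a (sh s y)) (Dc m b y).
Proof.
  intros HZ a b Hb. unfold Dc at 1. rewrite csum_add. fold (Dc m (a * M m s) y). rewrite HZ.
  rewrite (csum_ext _ (fun j => Cmult (psi m j y) (psi (sh s m) a (sh s y)))).
  2:{ intros; apply psi_split; auto; lia. }
  rewrite csum_scal_r. unfold Dc. ring.
Qed.

Lemma Fsplit m (hm : forall j, (2 <= m j)%nat) s y :
  (forall a, Dc m (a * M m s) y = RtoC 0) -> forall a b, (b <= M m s)%nat ->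
  Fc m (a * M m s + b) y =
  Cplus (Cmult (Dc (sh s m) a (sh s y)) (Fc m (M m s) y)) (Cmult (psi (sh s m) a (sh s y)) (Fc m b y)).
Proof.
  intros HZ a b Hb. unfold Fc at 1. rewrite csum_add. rewrite csum_block.
  rewrite (csum_ext (fun i => csum _ _) (fun i => Cmult (psi (sh s m) i (sh s y)) (Fc m (M m s) y))).
  2:{ intros i _. unfold Fc. rewrite <- csum_scal_l. apply csum_ext. intros j Hj.
      apply Dsplit; auto; lia. }
  rewrite csum_scal_r.
  rewrite (csum_ext (fun i => Dc m (a * M m s + i) y) (fun j => Cmult (psi (sh s m) a (sh s y)) (Dc m j y))).
  2:{ intros; apply Dsplit; auto; lia. }
  rewrite csum_scal_l. reflexivity.
Qed.

Lemma G1 m (hm : forall j, (2 <= m j)%nat) k y :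
  (forall p, (p < k)%nat -> y p = 0%nat) -> (0 < y k < m k)%nat ->
  forall j, Cmod (Dc m j y) <= INR (M m (S k)).
Proof.
  intros H0 Hk j. set (Mk := M m (S k)).
  assert (HM : (1 <= Mk)%nat) by apply M_pos, hm.
  rewrite (Nat.div_mod_eq j Mk). unfold Dc. rewrite csum_add.
  fold (Dc m (Mk * (j / Mk)) y). rewrite Nat.mul_comm. unfold Mk. rewrite Lz by auto.
  rewrite Cplus_0_l. fold Mk.
  eapply Rle_trans. apply Cmod_csum_le with (c := 1). intros; unfold psi; rewrite Cmod_ec; lra.
  rewrite Rmult_1_r. apply le_INR. pose proof (Nat.mod_upper_bound j Mk). lia.
Qed.

Lemma Dc_triv m j y : Cmod (Dc m j y) <= INR j.
Proof.
  unfold Dc. eapply Rle_trans. apply Cmod_csum_le with (c := 1).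
  intros; unfold psi; rewrite Cmod_ec; lra. lra.
Qed.

Lemma Fc_bound m j y c : (forall i, (i < j)%nat -> Cmod (Dc m i y) <= c) -> Cmod (Fc m j y) <= INR j * c.
Proof. intros. unfold Fc. apply Cmod_csum_le; auto. Qed.

Lemma fst_csum f n : fst (csum f n) = rsum (fun i => fst (f i)) n.
Proof. induction n; simpl; auto. rewrite IHn; auto. Qed.
Lemma snd_csum f n : snd (csum f n) = rsum (fun i => snd (f i)) n.
Proof. induction n; simpl; auto. rewrite IHn; auto. Qed.

Lemma Kabs_eq m n y : (1 <= n)%nat -> K_abs m n y = / INR n * Cmod (Fc m n y).
Proof.
  intros Hn.
  assert (E : (K_re m n y, K_im m n y) = Cmult (RtoC (/ INR n)) (Fc m n y)).
  { unfold K_re, K_im, Cmult, RtoC, Fc. simpl. rewrite fst_csum, snd_csum.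
    unfold D_re, D_im, Dc. f_equal.
    - rewrite (rsum_ext (fun i => fst (csum (fun i0 => psi m i0 y) i)) (fun i => rsum (fun k => psi_re m k y) i)). ring.
      intros. rewrite fst_csum. reflexivity.
    - rewrite (rsum_ext (fun i => snd (csum (fun i0 => psi m i0 y) i)) (fun i => rsum (fun k => psi_im m k y) i)). ring.
      intros. rewrite snd_csum. reflexivity. }
  unfold K_abs. change (sqrt (K_re m n y ^ 2 + K_im m n y ^ 2)) with (Cmod (K_re m n y, K_im m n y)).
  rewrite E, Cmod_mult, Cmod_R. rewrite Rabs_pos_eq. reflexivity.
  apply Rlt_le, Rinv_0_lt_compat, lt_0_INR; lia.
Qed.

Definition yhyp m N k l (y : nat -> nat) :=
  (forall p, (p < k)%nat -> y p = 0%nat) /\ (0 < y k < m k)%nat /\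
  (forall p, (k < p)%nat -> (p < l)%nat -> y p = 0%nat) /\
  ((l < N)%nat -> (0 < y l < m l)%nat).

Lemma Kkey m (hm : forall j, (2 <= m j)%nat) Bd (hB : forall j, (m j <= Bd)%nat) N k l y :
  (k + 1 <= l)%nat -> (l <= N)%nat -> yhyp m N k l y ->
  forall B', (B' <= M m N)%nat ->
  Cmod (Fc m B' y) <= (INR Bd * INR Bd + INR Bd) * INR (M m k) * INR (M m l).
Proof.
  intros Hkl HlN [H0 [Hk [Hmid Hl]]] B' HB'.
  set (s := S k). set (Ms := M m s).
  assert (HMs : (1 <= Ms)%nat) by apply M_pos, hm.
  assert (HZ : forall a, Dc m (a * M m s) y = RtoC 0) by (apply Lz; auto).
  pose proof (Nat.div_mod_eq B' Ms) as EB.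
  pose proof (Nat.mod_upper_bound B' Ms ltac:(lia)) as Hb.
  set (A' := (B' / Ms)%nat) in *. set (b' := (B' mod Ms)%nat) in *.
  replace B' with (A' * M m s + b')%nat by (unfold Ms in EB; lia).
  rewrite Fsplit by (auto; unfold Ms in Hb; lia).
  assert (Gb : forall i, Cmod (Dc m i y) <= INR Ms) by (intros; apply G1; auto).
  assert (F1 : Cmod (Fc m (M m s) y) <= INR Ms * INR Ms) by (apply Fc_bound; auto).
  assert (F2 : Cmod (Fc m b' y) <= INR Ms * INR Ms).
  { eapply Rle_trans. apply Fc_bound. intros; apply Gb. apply Rmult_le_compat_r. apply pos_INR.
    apply le_INR; lia. }
  assert (Hmk : INR Ms <= INR Bd * INR (M m k)).
  { rewrite <- mult_INR. apply le_INR. unfold Ms, s. simpl. specialize (hB k). nia. }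
  assert (Hml : INR Ms <= INR (M m l)) by (apply le_INR, M_mono; auto; unfold s; lia).
  assert (Hd : Cmod (Dc (sh s m) A' (sh s y)) * INR Ms <= INR Bd * INR (M m l)).
  { destruct (Nat.lt_ge_cases l N) as [HlN'|HlN'].
    - set (k' := (l - S k)%nat).
      assert (hm' : forall j, (2 <= sh s m j)%nat) by (intros; apply hm).
      pose proof (G1 (sh s m) hm' k' (sh s y)) as G.
      assert (G' : Cmod (Dc (sh s m) A' (sh s y)) <= INR (M (sh s m) (S k'))).
      { apply G.
        - intros p Hp. unfold sh, s. apply Hmid; unfold k' in Hp; lia.
        - unfold sh, s, k'. replace (S k + (l - S k))%nat with l by lia. auto. }
      eapply Rle_trans. apply Rmult_le_compat_r. apply pos_INR. apply G'.
      rewrite <- !mult_INR. apply le_INR. unfold Ms.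
      rewrite Nat.mul_comm, <- M_add. unfold s, k'. replace (S k + S (l - S k))%nat with (S l) by lia.
      simpl. specialize (hB l). nia.
    - assert (l = N) by lia. subst l.
      eapply Rle_trans. apply Rmult_le_compat_r. apply pos_INR. apply Dc_triv.
      rewrite <- !mult_INR. apply le_INR. unfold Ms in *.
      assert (A' * M m s <= M m N)%nat by lia. specialize (hB 0%nat). specialize (hm 0%nat). nia. }
  eapply Rle_trans. apply Cmod_triangle. rewrite !Cmod_mult. unfold psi. rewrite Cmod_ec.
  pose proof (Cmod_ge_0 (Dc (sh s m) A' (sh s y))).
  pose proof (Cmod_ge_0 (Fc m (M m s) y)).
  pose proof (pos_INR Ms). pose proof (pos_INR Bd). pose proof (pos_INR (M m k)). pose proof (pos_INR (M m l)).
  set (a := Cmod (Dc (sh s m) A' (sh s y))) in *.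
  set (f1 := Cmod (Fc m (M m s) y)) in *.
  set (f2 := Cmod (Fc m b' y)) in *.
  assert (a * f1 <= INR Bd * INR (M m l) * INR Ms).
  { apply Rle_trans with (a * (INR Ms * INR Ms)). apply Rmult_le_compat_l; auto. nra. }
  assert (INR Bd * INR (M m l) * INR Ms <= INR Bd * INR (M m l) * (INR Bd * INR (M m k))).
  { apply Rmult_le_compat_l; nra. }
  assert (INR Ms * INR Ms <= INR (M m l) * (INR Bd * INR (M m k))).
  { apply Rmult_le_compat; nra. }
  nra.
Qed.

Lemma rsum_block f a b : rsum f (a * b) = rsum (fun i => rsum (fun j => f (i * b + j)%nat) b) a.
Proof.
  induction a; simpl; auto. rewrite <- IHa. rewrite Nat.add_comm, rsum_add. reflexivity.
Qed.

Lemma rsum_le_const f n c : (forall j, (j < n)%nat -> f j <= c) -> rsum f n <= INR n * c.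
Proof.
  induction n; intros H; cbn [rsum]. simpl. lra. rewrite S_INR.
  pose proof (IHn (fun j Hj => H j ltac:(lia))). pose proof (H n ltac:(lia)). lra.
Qed.

Lemma Kpt m (hm : forall j, (2 <= m j)%nat) Bd (hB : forall j, (m j <= Bd)%nat) N k l y n :
  (k < N)%nat -> (k + 1 <= l)%nat -> (l <= N)%nat -> yhyp m N k l y -> (M m N <= n)%nat ->
  K_abs m n y <= 2 * ((INR Bd * INR Bd + INR Bd) * INR (M m k) * INR (M m l)) / INR (M m N).
Proof.
  intros HkN Hkl HlN Hy Hn.
  set (K := (INR Bd * INR Bd + INR Bd) * INR (M m k) * INR (M m l)).
  assert (HMN : (1 <= M m N)%nat) by apply M_pos, hm.
  assert (HZ : forall a, Dc m (a * M m N) y = RtoC 0).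
  { intros a. replace N with (S k + (N - S k))%nat by lia. rewrite M_add.
    replace (a * (M m (S k) * M (sh (S k) m) (N - S k)))%nat
      with ((a * M (sh (S k) m) (N - S k)) * M m (S k))%nat by ring.
    destruct Hy as [H0 [Hk _]]. apply Lz; auto. }
  pose proof (Nat.div_mod_eq n (M m N)) as En.
  pose proof (Nat.mod_upper_bound n (M m N) ltac:(lia)) as Hb.
  set (A := (n / M m N)%nat) in *. set (B := (n mod M m N)%nat) in *.
  assert (HA : (1 <= A)%nat) by (destruct A; lia).
  assert (HAn : (A * M m N <= n)%nat) by lia.
  rewrite Kabs_eq by lia.
  assert (HF : Cmod (Fc m n y) <= (INR A + 1) * K).
  { replace n with (A * M m N + B)%nat by lia.
    rewrite Fsplit by (auto; lia).
    eapply Rle_trans. apply Cmod_triangle. rewrite !Cmod_mult. unfold psi. rewrite Cmod_ec.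
    pose proof (Dc_triv (sh N m) A (sh N y)).
    pose proof (Kkey m hm Bd hB N k l y Hkl HlN Hy (M m N) (Nat.le_refl _)).
    pose proof (Kkey m hm Bd hB N k l y Hkl HlN Hy B ltac:(lia)). fold K in H0, H1.
    pose proof (Cmod_ge_0 (Dc (sh N m) A (sh N y))). pose proof (Cmod_ge_0 (Fc m (M m N) y)).
    pose proof (pos_INR A).
    assert (Cmod (Dc (sh N m) A (sh N y)) * Cmod (Fc m (M m N) y) <= INR A * K).
    { apply Rmult_le_compat; auto. }
    lra. }
  assert (HK : 0 <= K).
  { unfold K. pose proof (pos_INR Bd). pose proof (pos_INR (M m k)). pose proof (pos_INR (M m l)).
    apply Rmult_le_pos; [apply Rmult_le_pos|]; nra. }
  assert (Hnpos : 0 < INR n) by (apply lt_0_INR; lia).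
  assert (HMpos : 0 < INR (M m N)) by (apply lt_0_INR; lia).
  assert (HAM : (INR A + 1) * INR (M m N) <= 2 * INR n).
  { assert (INR (A * M m N) <= INR n) by (apply le_INR; auto). rewrite mult_INR in H.
    assert (1 <= INR A) by (apply (le_INR 1); auto). nra. }
  apply Rle_trans with (/ INR n * ((INR A + 1) * K)).
  { apply Rmult_le_compat_l; auto. apply Rlt_le, Rinv_0_lt_compat; auto. }
  apply (Rmult_le_reg_r (INR (M m N) * INR n)). nra.
  unfold Rdiv. replace (/ INR n * ((INR A + 1) * K) * (INR (M m N) * INR n))
    with ((INR A + 1) * INR (M m N) * K) by (field; lra).
  replace (2 * K * / INR (M m N) * (INR (M m N) * INR n)) with (2 * INR n * K) by (field; lra).
  apply Rmult_le_compat_r; auto.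
Qed.

Theorem lemma4 (m : nat -> nat)
  (hm2 : forall j, (2 <= m j)%nat)
  (hbdd : exists B, forall j, (m j <= B)%nat) :
  exists c : R,
    forall (N k l : nat) (x : nat -> nat) (n : nat),
      (1 <= N)%nat -> (k <= N - 1)%nat -> (k + 1 <= l)%nat -> (l <= N)%nat ->
      in_INkl m N k l x ->
      (M m N <= n)%nat ->
      forall v : R,
        haar_int_IN m N (fun t => K_abs m n (gsub m x t)) v ->
        v <= c * INR (M m l) * INR (M m k) / (INR (M m N) ^ 2).
Proof.
  destruct hbdd as [Bd hB].
  exists (2 * (INR Bd * INR Bd + INR Bd)).
  intros N k l x n HN Hk Hkl HlN [HxG [Hx0 [Hxk [Hxmid Hxl]]]] Hn v [J [HJ [_ Hv]]].
  set (bnd := 2 * ((INR Bd * INR Bd + INR Bd) * INR (M m k) * INR (M m l)) / INR (M m N)).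
  assert (HMN : (1 <= M m N)%nat) by apply M_pos, hm2.
  assert (HMpos : 0 < INR (M m N)) by (apply lt_0_INR; lia).
  assert (Hbnd : 0 <= bnd).
  { unfold bnd. pose proof (pos_INR Bd). pose proof (pos_INR (M m k)). pose proof (pos_INR (M m l)).
    apply Rmult_le_pos; [|apply Rlt_le, Rinv_0_lt_compat; auto].
    apply Rmult_le_pos; [lra|]. apply Rmult_le_pos; [apply Rmult_le_pos|]; nra. }
  set (Q := M (sh N m) (J - N)).
  assert (HQ : M m J = (Q * M m N)%nat).
  { unfold Q. replace J with (N + (J - N))%nat at 1 by lia. rewrite M_add. ring. }
  assert (HQpos : (1 <= Q)%nat) by (apply M_pos; intros; apply hm2).
  assert (Hpt : forall q, K_abs m n (gsub m x (fun j => digit m (q * M m N + 0) j)) <= bnd).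
  { intros q. apply Kpt with (l := l); auto; try lia.
    set (y := gsub m x (fun j => digit m (q * M m N + 0) j)).
    assert (Ey : forall p, (p < N)%nat -> y p = x p).
    { intros p Hp. unfold y, gsub. rewrite digit_lo by (auto; lia).
      unfold digit. rewrite Nat.Div0.div_0_l by (pose proof (M_pos m hm2 p); lia).
      rewrite Nat.Div0.mod_0_l, Nat.sub_0_r.
      replace (x p + m p)%nat with (x p + 1 * m p)%nat by lia. rewrite Nat.Div0.mod_add.
      apply Nat.mod_small, HxG. }
    split; [|split; [|split]].
    - intros p Hp. rewrite Ey by lia. auto.
    - rewrite Ey by lia. pose proof (HxG k). lia.
    - intros p H1 H2. rewrite Ey by lia. auto.
    - intros H. rewrite Ey by lia. pose proof (HxG l). specialize (Hxl H). lia. }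
  rewrite Hv. rewrite HQ, rsum_block.
  set (g := fun a => if Nat.eqb (a mod M m N) 0 then K_abs m n (gsub m x (fun j => digit m a j)) else 0).
  assert (Hin : forall q, rsum (fun j => g (q * M m N + j)%nat) (M m N) <= bnd).
  { intros q. pose proof (rsum_add (fun j => g (q * M m N + j)%nat) 1 (M m N - 1)) as E.
    replace (1 + (M m N - 1))%nat with (M m N) in E by lia. rewrite E.
    rewrite (rsum_zero (fun i => g (q * M m N + (1 + i))%nat)).
    - cbn [rsum]. unfold g. destruct (Nat.eqb _ 0); [pose proof (Hpt q)|]; lra.
    - intros j Hj. unfold g.
      replace (q * M m N + (1 + j))%nat with ((1 + j) + q * M m N)%nat by ring.
      rewrite Nat.Div0.mod_add, Nat.mod_small by lia. simpl. reflexivity. }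
  fold g.
  apply Rle_trans with (INR Q * bnd / INR (Q * M m N)).
  { unfold Rdiv. apply Rmult_le_compat_r.
    - apply Rlt_le, Rinv_0_lt_compat, lt_0_INR. nia.
    - apply rsum_le_const. intros; apply Hin. }
  rewrite mult_INR. unfold bnd. simpl.
  assert (0 < INR Q) by (apply lt_0_INR; lia).
  right. field. lra.
Qed.
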